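(* Let $m,n\in\mathbb{N}$ with $m\ge2$, and $b_{n,i}(x)=\binom ni x^i(1-x)^{n-i}$ for $i=0,\dots,n$. Then \[ \sum_{i_1,\dots,i_m=0}^n\Bigl(\sum_{l=1}^m b_{n,i_1}(x_l)b_{n,i_2}(x_l)\cdots b_{n,i_m}(x_l)\;-\;m\,b_{n,i_1}(x_1)b_{n,i_2}(x_2)\cdots b_{n,i_m}(x_m)\Bigr)f\Bigl(\frac{i_1+\dots+i_m}{mn}\Bigr)\ge0 \] for every convex continuous function $f:[0,1]\to\mathbb{R}$ and all $x_1,\dots,x_m\in[0,1]$. *)

(* Defs.v *)
From Stdlib Require Import Reals List.
Open Scope R_scope.

Definition bern (n i : nat) (x : R) : R :=
  C n i * x ^ i * (1 - x) ^ (n - i).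

Fixpoint rsum (m : nat) (F : nat -> R) : R :=
  match m with O => 0 | S k => rsum k F + F k end.
Fixpoint rprod (m : nat) (F : nat -> R) : R :=
  match m with O => 1 | S k => rprod k F * F k end.

(* sum over all m-tuples (i_1,...,i_m) in {0,...,n}^m, tuples given as lists *)
Fixpoint sum_tuples (m n : nat) (F : list nat -> R) : R :=
  match m with
  | O => F nil
  | S k => sum_f_R0 (fun i => sum_tuples k n (fun l => F (i :: l))) n
  end.

Definition convex_on01 (f : R -> R) : Prop :=
  forall a b t, 0 <= a <= 1 -> 0 <= b <= 1 -> 0 <= t <= 1 ->
    f (t * a + (1 - t) * b) <= t * f a + (1 - t) * f b.

Definition continuous_on01 (f : R -> R) : Prop :=
  forall x, 0 <= x <= 1 -> limit1_in f (fun y => 0 <= y <= 1) (f x) x.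

(* the summand: indices is = [i_1;...;i_m] (0-based positions), points x 0..x (m-1) *)
Definition summand (m n : nat) (x : nat -> R) (f : R -> R) (is : list nat) : R :=
  (rsum m (fun l => rprod m (fun j => bern n (nth j is O) (x l)))
   - INR m * rprod m (fun j => bern n (nth j is O) (x j)))
  * f (INR (fold_right plus O is) / (INR m * INR n)).

(* Main.v *)
Require Import Defs.
From Stdlib Require Import Reals List Lra Lia Psatz Factorial.
Open Scope R_scope.

Fixpoint Ex (ps : list R) (g : nat -> R) : R :=
  match ps with
  | nil => g O
  | p :: t => p * Ex t (fun s => g (S s)) + (1 - p) * Ex t g
  end.

Lemma Ex_ext : forall ps g h, (forall s, g s = h s) -> Ex ps g = Ex ps h.
Proof.
  induction ps as [|p t IH]; intros g h H; simpl.
  - apply H.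
  - rewrite (IH (fun s => g (S s)) (fun s => h (S s))) by (intro; apply H).
    rewrite (IH g h H). reflexivity.
Qed.

Lemma Ex_lin : forall ps g h a b,
  Ex ps (fun s => a * g s + b * h s) = a * Ex ps g + b * Ex ps h.
Proof.
  induction ps as [|p t IH]; intros g h a b; simpl.
  - reflexivity.
  - specialize (IH (fun s => g (S s)) (fun s => h (S s)) a b) as H1.
    cbv beta in H1. rewrite H1. rewrite IH. ring.
Qed.

Lemma Ex_sub : forall ps g h, Ex ps (fun s => g s - h s) = Ex ps g - Ex ps h.
Proof.
  intros. rewrite (Ex_ext ps _ (fun s => 1 * g s + (-1) * h s)) by (intro; ring).
  rewrite Ex_lin. ring.
Qed.

Definition gp (p : R) (g : nat -> R) := fun s => p * g (S s) + (1 - p) * g s.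
Definition dlt (g : nat -> R) := fun s => g (S s) - g s.

Lemma Ex_peel : forall p t g, Ex (p :: t) g = Ex t (gp p g).
Proof. intros. unfold gp. rewrite Ex_lin. reflexivity. Qed.

Lemma Ex_cons : forall p t g, Ex (p :: t) g = Ex t g + p * Ex t (dlt g).
Proof. intros. unfold dlt. rewrite Ex_sub. simpl. ring. Qed.

Lemma Ex_app : forall ps qs h, Ex (ps ++ qs) h = Ex ps (fun i => Ex qs (fun t => h (i + t)%nat)).
Proof.
  induction ps as [|p t IH]; intros qs h; simpl.
  - reflexivity.
  - rewrite IH. rewrite IH. reflexivity.
Qed.

Lemma Ex_pos : forall K q h, 0 <= q <= 1 -> (forall s, (s <= K)%nat -> 0 <= h s) ->
  0 <= Ex (repeat q K) h.
Proof.
  induction K; intros q h Hq Hh; simpl.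
  - apply Hh; lia.
  - apply Rplus_le_le_0_compat; apply Rmult_le_pos; try lra;
    apply IHK; auto; intros; apply Hh; lia.
Qed.

Lemma Ex_mono : forall K d p q, 0 <= p -> p <= q -> q <= 1 ->
  (forall s, (s + 1 <= K)%nat -> d s <= d (S s)) ->
  Ex (repeat p K) d <= Ex (repeat q K) d.
Proof.
  induction K; intros d p q H1 H2 H3 Hd; simpl.
  - lra.
  - assert (A1 : Ex (repeat p K) (fun s => d (S s)) <= Ex (repeat q K) (fun s => d (S s)))
      by (apply IHK; auto; intros; apply Hd; lia).
    assert (A2 : Ex (repeat p K) d <= Ex (repeat q K) d)
      by (apply IHK; auto; intros; apply Hd; lia).
    assert (A3 : 0 <= Ex (repeat q K) (fun s => d (S s) - d s)).
    { apply Ex_pos; [lra|]. intros. assert (d s <= d (S s)) by (apply Hd; lia). lra. }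
    rewrite Ex_sub in A3.
    assert (p * Ex (repeat p K) (fun s => d (S s)) <= p * Ex (repeat q K) (fun s => d (S s)))
      by (apply Rmult_le_compat_l; lra).
    assert ((1-p) * Ex (repeat p K) d <= (1-p) * Ex (repeat q K) d)
      by (apply Rmult_le_compat_l; lra).
    assert ((q - p) * (Ex (repeat q K) (fun s => d (S s)) - Ex (repeat q K) d) >= 0)
      by (apply Rle_ge, Rmult_le_pos; lra).
    nra.
Qed.

Definition cvx (K : nat) (g : nat -> R) :=
  forall s, (s + 2 <= K)%nat -> 2 * g (S s) <= g s + g (S (S s)).

Lemma cvx_gp : forall K g p, 0 <= p <= 1 -> cvx (S K) g -> cvx K (gp p g).
Proof.
  unfold cvx, gp; intros K g p Hp H s Hs.
  assert (A1 := H s ltac:(lia)). assert (A2 := H (S s) ltac:(lia)).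
  assert (p * (2 * g (S (S s))) <= p * (g (S s) + g (S (S (S s))))) by (apply Rmult_le_compat_l; lra).
  assert ((1-p) * (2 * g (S s)) <= (1-p) * (g s + g (S (S s)))) by (apply Rmult_le_compat_l; lra).
  lra.
Qed.

Lemma twopt : forall K g a b, 0 <= a <= 1 -> 0 <= b <= 1 -> cvx (S K) g ->
  INR (S K) * Ex (a :: repeat b K) g <= Ex (repeat a (S K)) g + INR K * Ex (repeat b (S K)) g.
Proof.
  induction K; intros g a b Ha Hb Hg.
  - simpl. lra.
  - assert (IH := IHK (gp b g) a b Ha Hb (cvx_gp _ _ _ Hb Hg)).
    assert (F1 : Ex (a :: repeat b (S K)) g = Ex (a :: repeat b K) (gp b g)).
    { rewrite Ex_peel. simpl repeat. rewrite Ex_peel. rewrite Ex_peel.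
      apply Ex_ext. intro s. unfold gp. ring. }
    assert (F2 : Ex (repeat a (S (S K))) g = Ex (repeat a (S K)) (gp a g))
      by (simpl repeat; apply Ex_peel).
    assert (F3 : Ex (repeat b (S (S K))) g = Ex (repeat b (S K)) (gp b g))
      by (simpl repeat; apply Ex_peel).
    assert (F4 : Ex (repeat a (S K)) (gp a g) - Ex (repeat a (S K)) (gp b g)
                 = (a - b) * Ex (repeat a (S K)) (dlt g)).
    { rewrite <- Ex_sub. rewrite (Ex_ext _ _ (fun s => (a - b) * dlt g s + 0 * dlt g s)).
      - rewrite Ex_lin. ring.
      - intro s. unfold gp, dlt. ring. }
    assert (F5 : Ex (repeat b (S K)) (gp b g) - Ex (a :: repeat b K) (gp b g)
                 = (b - a) * Ex (repeat b (S K)) (dlt g)).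
    { change (repeat b (S K)) with (b :: repeat b K) at 1.
      rewrite !Ex_cons.
      replace (Ex (repeat b (S K)) (dlt g)) with (Ex (repeat b K) (dlt (gp b g))).
      - ring.
      - change (repeat b (S K)) with (b :: repeat b K). rewrite Ex_peel.
        apply Ex_ext. intro s. unfold gp, dlt. ring. }
    assert (F6 : 0 <= (a - b) * (Ex (repeat a (S K)) (dlt g) - Ex (repeat b (S K)) (dlt g))).
    { assert (Hm : forall s, (s + 1 <= S K)%nat -> dlt g s <= dlt g (S s)).
      { intros s Hs. unfold dlt. assert (A := Hg s ltac:(lia)). lra. }
      destruct (Rle_dec a b) as [Hab|Hab].
      + assert (Ex (repeat a (S K)) (dlt g) <= Ex (repeat b (S K)) (dlt g))
          by (apply Ex_mono; auto; lra).
        nra.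
      + assert (Ex (repeat b (S K)) (dlt g) <= Ex (repeat a (S K)) (dlt g))
          by (apply Ex_mono; auto; lra).
        nra. }
    rewrite F1, F2, F3. rewrite (S_INR (S K)). rewrite (S_INR K) in *.
    nra.
Qed.

Fixpoint lsum (F : R -> R) (l : list R) : R :=
  match l with nil => 0 | a :: t => F a + lsum F t end.

Lemma lsum_ext : forall F G l, (forall x, F x = G x) -> lsum F l = lsum G l.
Proof. induction l; intros; simpl; auto. rewrite IHl, H; auto. Qed.

Lemma lsum_bound : forall (F G : R -> R) c d A l,
  (forall q, In q l -> c * F q <= A + d * G q) ->
  c * lsum F l <= INR (length l) * A + d * lsum G l.
Proof.
  induction l; intros H; cbn [length lsum].
  - simpl. lra.
  - assert (H1 := H a (or_introl eq_refl)).
    assert (H2 := IHl (fun q Hq => H q (or_intror Hq))).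
    rewrite S_INR. nra.
Qed.

Lemma main_ineq : forall ps g, Forall (fun p => 0 <= p <= 1) ps -> cvx (length ps) g ->
  INR (length ps) * Ex ps g <= lsum (fun p => Ex (repeat p (length ps)) g) ps.
Proof.
  induction ps as [|p qs IH]; intros g Hps Hg.
  - simpl. lra.
  - inversion Hps as [|? ? Hp Hqs]; subst.
    destruct qs as [|q0 qs0].
    + simpl. lra.
    + set (qs := q0 :: qs0) in *.
      set (K := length qs) in *.
      assert (HK : (0 < K)%nat) by (unfold K, qs; simpl; lia).
      change (length (p :: qs)) with (S K).
      rewrite Ex_peel.
      assert (I1 := IH (gp p g) Hqs (cvx_gp _ _ _ Hp Hg)).
      fold K in I1.
      rewrite (lsum_ext _ (fun q => Ex (p :: repeat q K) g)) in I1
        by (intro; rewrite Ex_peel; reflexivity).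
      assert (I2 : INR (S K) * lsum (fun q => Ex (p :: repeat q K) g) qs <=
                   INR K * Ex (repeat p (S K)) g + INR K * lsum (fun q => Ex (repeat q (S K)) g) qs).
      { apply lsum_bound. intros q Hq. apply twopt; auto.
        rewrite Forall_forall in Hqs. apply Hqs; auto. }
      change (INR (S K) * Ex qs (gp p g) <= Ex (repeat p (S K)) g + lsum (fun q => Ex (repeat q (S K)) g) qs).
      assert (0 < INR K) by (apply lt_0_INR; auto).
      rewrite S_INR in *. nra.
Qed.

Lemma C_n_0' : forall n, C n 0 = 1.
Proof. intros. unfold C. rewrite Nat.sub_0_r. simpl fact. rewrite INR_1.
  field. apply INR_fact_neq_0. Qed.
Lemma C_n_n' : forall n, C n n = 1.
Proof. intros. unfold C. rewrite Nat.sub_diag. simpl fact. rewrite INR_1.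
  field. apply INR_fact_neq_0. Qed.

Lemma bern_pascal : forall n i y, (i <= S n)%nat ->
  bern (S n) i y = (match i with O => 0 | S j => y * bern n j y end)
                   + (if Nat.eqb i (S n) then 0 else (1 - y) * bern n i y).
Proof.
  intros n i y Hi. unfold bern.
  destruct i as [|j].
  - simpl Nat.eqb. rewrite !C_n_0', !Nat.sub_0_r. simpl. ring.
  - destruct (Nat.eqb (S j) (S n)) eqn:E.
    + apply Nat.eqb_eq in E. injection E as ->. rewrite !C_n_n', !Nat.sub_diag. simpl. ring.
    + apply Nat.eqb_neq in E. assert (j < n)%nat by lia.
      rewrite <- pascal by auto.
      replace (S n - S j)%nat with (n - j)%nat by lia.
      replace (n - j)%nat with (S (n - S j))%nat by lia. simpl. ring.
Qed.

Lemma sum_lin : forall F G a b N,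
  sum_f_R0 (fun i => a * F i + b * G i) N = a * sum_f_R0 F N + b * sum_f_R0 G N.
Proof. induction N; simpl; [ring|rewrite IHN; ring]. Qed.

Lemma sum_scal : forall F a N, sum_f_R0 (fun i => a * F i) N = a * sum_f_R0 F N.
Proof. induction N; simpl; [ring|rewrite IHN; ring]. Qed.

Lemma bern_sum : forall n y g, sum_f_R0 (fun i => bern n i y * g i) n = Ex (repeat y n) g.
Proof.
  induction n; intros y g.
  - simpl. unfold bern. rewrite C_n_0'. simpl. ring.
  - simpl repeat. cbn [Ex]. rewrite <- !IHn.
    rewrite (sum_eq _ (fun i => 1 * ((match i with O => 0 | S j => y * bern n j y end) * g i)
       + 1 * ((if Nat.eqb i (S n) then 0 else (1 - y) * bern n i y) * g i))).
    2:{ intros i Hi. rewrite bern_pascal by auto. ring. }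
    rewrite sum_lin.
    rewrite decomp_sum by lia. simpl pred.
    rewrite tech5. rewrite Nat.eqb_refl.
    rewrite (sum_eq (fun i => (if Nat.eqb i (S n) then 0 else (1 - y) * bern n i y) * g i)
                    (fun i => (1 - y) * (bern n i y * g i))).
    2:{ intros i Hi. destruct (Nat.eqb i (S n)) eqn:E; [apply Nat.eqb_eq in E; lia|ring]. }
    rewrite (sum_eq (fun i => (match S i with O => 0 | S j => y * bern n j y end) * g (S i))
                    (fun i => y * (bern n i y * g (S i)))) by (intros; ring).
    rewrite (sum_scal (fun i => bern n i y * g (S i))).
    rewrite (sum_scal (fun i => bern n i y * g i)). ring.
Qed.

Lemma st_ext : forall k n F G, (forall l, F l = G l) -> sum_tuples k n F = sum_tuples k n G.
Proof.
  induction k; intros n F G H; simpl; auto.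
  apply sum_eq. intros. apply IHk. intros; apply H.
Qed.

Lemma st_lin : forall k n F G a b,
  sum_tuples k n (fun l => a * F l + b * G l) = a * sum_tuples k n F + b * sum_tuples k n G.
Proof.
  induction k; intros n F G a b; simpl; auto.
  rewrite (sum_eq _ (fun i => a * sum_tuples k n (fun l => F (i :: l)) + b * sum_tuples k n (fun l => G (i :: l)))).
  - apply sum_lin.
  - intros. apply (IHk n (fun l => F (i :: l)) (fun l => G (i :: l))).
Qed.

Lemma st_scal : forall k n F a, sum_tuples k n (fun l => a * F l) = a * sum_tuples k n F.
Proof.
  intros. rewrite (st_ext _ _ _ (fun l => a * F l + 0 * F l)) by (intro; ring).
  rewrite st_lin. ring.
Qed.

Lemma st_rsum : forall M k n (Fs : nat -> list nat -> R),
  sum_tuples k n (fun l => rsum M (fun j => Fs j l)) = rsum M (fun j => sum_tuples k n (Fs j)).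
Proof.
  induction M; intros; simpl.
  - rewrite (st_ext _ _ _ (fun l => 0 * Fs O l + 0 * Fs O l)) by (intro; ring).
    rewrite st_lin. ring.
  - rewrite (st_ext _ _ _ (fun l => 1 * rsum M (fun j => Fs j l) + 1 * Fs M l)) by (intro; ring).
    rewrite st_lin. rewrite IHM. ring.
Qed.

Lemma rprod_shift : forall k F, rprod (S k) F = F O * rprod k (fun j => F (S j)).
Proof.
  induction k; intros; simpl. ring. simpl in IHk. rewrite IHk. ring.
Qed.

Lemma rsum_mult_r : forall k F c, rsum k F * c = rsum k (fun j => F j * c).
Proof. induction k; intros; simpl. ring. rewrite <- IHk. ring. Qed.

Lemma fm_shift : forall n k (y : nat -> R) s,
  flat_map (fun j => repeat (y j) n) (seq (S s) k) = flat_map (fun j => repeat (y (S j)) n) (seq s k).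
Proof. induction k; intros; simpl; auto. rewrite IHk. reflexivity. Qed.

Lemma tup : forall k n (y : nat -> R) (h : nat -> R),
  sum_tuples k n (fun l => rprod k (fun j => bern n (nth j l O) (y j)) * h (fold_right plus O l))
  = Ex (flat_map (fun j => repeat (y j) n) (seq 0 k)) h.
Proof.
  induction k; intros n y h.
  - simpl. ring.
  - cbn [sum_tuples].
    rewrite (sum_eq _ (fun i => bern n i (y O) * Ex (flat_map (fun j => repeat (y (S j)) n) (seq 0 k)) (fun t => h (i + t)%nat))).
    + rewrite bern_sum. cbn [seq flat_map]. rewrite Ex_app. rewrite fm_shift. reflexivity.
    + intros i Hi. rewrite <- (IHk n (fun j => y (S j)) (fun t => h (i + t)%nat)).
      rewrite <- st_scal. apply st_ext. intro l.
      rewrite rprod_shift. simpl. ring.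
Qed.

Lemma fm_const : forall n k (c : R) s,
  flat_map (fun _ : nat => repeat c n) (seq s k) = repeat c (k * n).
Proof.
  induction k; intros; simpl; auto. rewrite IHk. rewrite repeat_app. reflexivity.
Qed.

Lemma lsum_app : forall F l1 l2, lsum F (l1 ++ l2) = lsum F l1 + lsum F l2.
Proof. induction l1; intros; simpl. ring. rewrite IHl1. ring. Qed.

Lemma lsum_rep : forall F c n, lsum F (repeat c n) = INR n * F c.
Proof. induction n; [simpl; ring|]. cbn [repeat lsum]. rewrite IHn, S_INR. ring. Qed.

Lemma rsum_ext : forall k F G, (forall j, F j = G j) -> rsum k F = rsum k G.
Proof. induction k; intros; simpl; auto. rewrite (IHk F G H), H. auto. Qed.

Lemma rsum_const : forall k c, rsum k (fun _ => c) = INR k * c.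
Proof. induction k; intros; [simpl; ring|]. cbn [rsum]. rewrite IHk, S_INR. ring. Qed.

Lemma fm_lsum : forall (x : nat -> R) n F k,
  lsum F (flat_map (fun j => repeat (x j) n) (seq 0 k)) = INR n * rsum k (fun j => F (x j)).
Proof.
  induction k; [simpl; ring|].
  rewrite seq_S, flat_map_app. rewrite lsum_app, IHk. simpl flat_map.
  rewrite app_nil_r, lsum_rep. cbn [rsum]. ring.
Qed.

Lemma fm_len : forall (x : nat -> R) n k,
  length (flat_map (fun j => repeat (x j) n) (seq 0 k)) = (k * n)%nat.
Proof.
  induction k; [reflexivity|].
  rewrite seq_S, flat_map_app, length_app, IHk. simpl. rewrite app_nil_r, repeat_length. lia.
Qed.

Lemma frac01 : forall s N, (s <= N)%nat -> 0 < INR N -> 0 <= INR s / INR N <= 1.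
Proof.
  intros s N Hs HN. assert (INR s <= INR N) by (apply le_INR; auto).
  assert (0 <= INR s) by apply pos_INR.
  split.
  - unfold Rdiv. apply Rmult_le_pos; auto. left. apply Rinv_0_lt_compat; auto.
  - apply Rmult_le_reg_r with (INR N); auto. unfold Rdiv.
    rewrite Rmult_assoc, Rinv_l by lra. lra.
Qed.

Theorem theorem4 (m n : nat) (hm : (2 <= m)%nat) (f : R -> R)
  (hconv : convex_on01 f) (hcont : continuous_on01 f)
  (x : nat -> R) (hx : forall l, (l < m)%nat -> 0 <= x l <= 1) :
  0 <= sum_tuples m n (summand m n x f).
Proof.
  set (g := fun s => f (INR s / (INR m * INR n))).
  set (ys := flat_map (fun j => repeat (x j) n) (seq 0 m)).
  assert (Step1 : sum_tuples m n (summand m n x f) =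
     rsum m (fun l => Ex (repeat (x l) (m * n)) g) - INR m * Ex ys g).
  { unfold summand.
    rewrite (st_ext _ _ _ (fun is => 1 * rsum m (fun l =>
         rprod m (fun j => bern n (nth j is O) (x l)) * g (fold_right plus O is))
       + (- INR m) * (rprod m (fun j => bern n (nth j is O) (x j)) * g (fold_right plus O is)))).
    2:{ intro l. rewrite <- rsum_mult_r. unfold g. ring. }
    rewrite st_lin. rewrite st_rsum. unfold ys. rewrite tup.
    rewrite (rsum_ext _ _ (fun l => Ex (repeat (x l) (m * n)) g)).
    - ring.
    - intro l. rewrite (tup m n (fun _ => x l) g). cbv beta. rewrite fm_const. reflexivity. }
  rewrite Step1.
  assert (Hlen : length ys = (m * n)%nat) by apply fm_len.
  destruct n as [|n'].
  - replace (m * 0)%nat with O in * by lia.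
    apply length_zero_iff_nil in Hlen. rewrite Hlen. simpl Ex.
    rewrite rsum_const. lra.
  - set (n := S n') in *.
    assert (Hall : Forall (fun p => 0 <= p <= 1) ys).
    { apply Forall_forall. intros p Hp. unfold ys in Hp.
      apply in_flat_map in Hp. destruct Hp as [j [Hj Hp]].
      apply repeat_spec in Hp. subst p. apply in_seq in Hj. apply hx. lia. }
    assert (HNpos : 0 < INR m * INR n).
    { apply Rmult_lt_0_compat; apply lt_0_INR; unfold n; lia. }
    assert (Hcvx : cvx (length ys) g).
    { rewrite Hlen. intros s Hs. unfold g.
      set (Nr := INR m * INR n) in *.
      assert (HN : Nr = INR (m * n)) by (unfold Nr; rewrite mult_INR; auto).
      assert (A := hconv (INR s / Nr) (INR (S (S s)) / Nr) (1/2)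
         ltac:(rewrite HN in *; apply frac01; [lia|assumption])
         ltac:(rewrite HN in *; apply frac01; [lia|assumption]) ltac:(lra)).
      replace (INR (S s) / Nr) with (1 / 2 * (INR s / Nr) + (1 - 1 / 2) * (INR (S (S s)) / Nr)).
      - lra.
      - rewrite !S_INR. field. lra. }
    assert (M := main_ineq ys g Hall Hcvx).
    rewrite Hlen in M. unfold ys in M at 2. rewrite fm_lsum in M.
    rewrite mult_INR in M.
    assert (0 < INR n) by (apply lt_0_INR; unfold n; lia).
    nra.
Qed.
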